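(* Let $a,x,u,v$ be integers with $3\le a\le x$, $0\le u\le a-3$, and $u+2\le v\le\min\left(a-1,\frac{a(x-1)}{x}\right)$. Let $\lambda$ consist of $ua+v$ parts equal to $x$ and $v-(u+1)$ parts equal to $ax$, and let $n=|\lambda|$, so that $n=x[(a+1)(v-1)+1]$ and $n-1=xa(v-1)+xv-1$. For $0\le i\le n-2$ write uniquely $i=\frac{n}{x}r_i+(v-1)p_i+q_i$ with integers $0\le r_i<x$, $0\le p_i<a+2$, $0\le q_i<v-1$, $0\le (v-1)p_i+q_i<n/x$. Let $f(i)=ar_i-(xv-1)p_i+xaq_i$ and, for $k\in\mathbb{Z}$, $F_k=\{i\in\{1,\dots,n-2\}:k=-\lfloor f(i)/(n-1)\rfloor\}$. Then $\{1,\dots,n-2\}=F_0\uplus F_1\uplus F_2$, i.e. $F_k=\emptyset$ for $k\notin\{0,1,2\}$. *)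

(* Defs.v *)
From mathcomp Require Import all_boot all_order all_algebra.
Set Implicit Arguments. Unset Strict Implicit. Unset Printing Implicit Defensive.
Import Order.TTheory GRing.Theory Num.Theory.

Definition lam (a x u v : nat) : seq nat :=
  nseq (u * a + v) x ++ nseq (v - (u + 1)) (a * x).

Definition nn (a x u v : nat) : nat := sumn (lam a x u v).

Definition r_i (a x u v i : nat) : nat := i %/ (nn a x u v %/ x).
Definition p_i (a x u v i : nat) : nat := (i %% (nn a x u v %/ x)) %/ (v - 1).
Definition q_i (a x u v i : nat) : nat := (i %% (nn a x u v %/ x)) %% (v - 1).

Local Open Scope ring_scope.
Definition f_i (a x u v i : nat) : int :=
  (a * r_i a x u v i)%:Z - (x * v - 1)%:Z * (p_i a x u v i)%:Z
  + (x * a * q_i a x u v i)%:Z.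

(* i \in F_k  iff  1 <= i <= n-2  and  k = - floor(f(i)/(n-1)).
   For a positive divisor, intdiv's %/ is floor division. *)
Definition inF (a x u v : nat) (k : int) (i : nat) : bool :=
  (1 <= i <= nn a x u v - 2)%N &&
  (k == - ((f_i a x u v i) %/ (nn a x u v - 1)%:Z)%Z).

(* Main.v *)
Require Import Defs.
From mathcomp Require Import all_boot all_order all_algebra.
From mathcomp Require Import zify.
Import Order.TTheory GRing.Theory Num.Theory.

Lemma nn_eq a x u v : (u + 1 <= v)%N ->
  nn a x u v = (x * ((a + 1) * (v - 1) + 1))%N.
Proof.
move=> h; rewrite /nn /lam sumn_cat !sumn_nseq.
have [w ->] : exists w, v = (u + 1 + w)%N by exists (v - (u + 1))%N; lia.
have -> : (u + 1 + w - (u + 1) = w)%N by lia.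
have -> : (u + 1 + w - 1 = u + w)%N by lia.
nia.
Qed.

Lemma L1 a x v : (1 <= x)%N -> (2 <= v)%N ->
  ((x*v-1)*(a+1) <= 2*(x*((a + 1) * (v - 1) + 1) - 1))%N.
Proof.
move=> hx hv.
have [y ->] : exists y, x = (y + 1)%N by exists (x - 1)%N; lia.
have [w ->] : exists w, v = (w + 2)%N by exists (v - 2)%N; lia.
have -> : ((y + 1) * (w + 2) - 1 = y*w + 2*y + w + 1)%N by rewrite !mulnDl !mulnDr; lia.
have -> : (w + 2 - 1 = w + 1)%N by lia.
have -> : ((y + 1) * ((a + 1) * (w + 1) + 1) - 1 = (y + 1) * ((a + 1) * (w + 1)) + y)%N by rewrite mulnDr; lia.
rewrite !mulnDl !mulnDr !mulnA; lia.
Qed.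
Lemma L2 a x v : (1 <= x)%N -> (2 <= v)%N ->
  (a * (x - 1) + x * a * (v - 2) < x*((a + 1) * (v - 1) + 1) - 1)%N.
Proof.
move=> hx hv.
have [y ->] : exists y, x = (y + 1)%N by exists (x - 1)%N; lia.
have [w ->] : exists w, v = (w + 2)%N by exists (v - 2)%N; lia.
have -> : (w + 2 - 1 = w + 1)%N by lia.
have -> : (w + 2 - 2 = w)%N by lia.
have -> : (y + 1 - 1 = y)%N by lia.
have -> : ((y + 1) * ((a + 1) * (w + 1) + 1) - 1 = (y + 1) * ((a + 1) * (w + 1)) + y)%N by rewrite mulnDr; lia.
rewrite !mulnDl !mulnDr !mulnA; lia.
Qed.

Lemma key a x u v i : (3 <= a)%N -> (u + 2 <= v)%N ->
  (1 <= i <= nn a x u v - 2)%N ->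
  let d := ((f_i a x u v i) %/ (nn a x u v - 1)%:Z)%Z in
  (-2 <= d)%R /\ (d < 1)%R.
Proof.
move=> ha hv /andP [hi1 hi2] d.
have hvu : (u + 1 <= v)%N by lia.
have hn := @nn_eq a x u v hvu.
set N := ((a + 1) * (v - 1) + 1)%N in hn.
have hN : (0 < N)%N by rewrite /N addn1.
have hx : (0 < x)%N.
  case: (posnP x) => // hx0; move: hi2; rewrite hn hx0 mul0n; lia.
have hNx : (nn a x u v %/ x = N)%N by rewrite hn mulKn.
have hr : (r_i a x u v i <= x - 1)%N.
  rewrite /r_i hNx; have : (i %/ N < x)%N by rewrite ltn_divLR // -hn; lia.
  lia.
have hv1 : (0 < v - 1)%N by lia.
have hm : (i %% N < N)%N by rewrite ltn_mod.
have hp : (p_i a x u v i <= a + 1)%N.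
  rewrite /p_i hNx -ltnS ltn_divLR // mulSn; rewrite /N in hm; lia.
have hq : (q_i a x u v i <= v - 2)%N.
  rewrite /q_i hNx; have : (i %% N %% (v - 1) < v - 1)%N by rewrite ltn_mod.
  lia.
move: hr hp hq; set r := r_i _ _ _ _ _; set p := p_i _ _ _ _ _;
  set q := q_i _ _ _ _ _ => hr hp hq.
have h1 : (a * r <= a * (x - 1))%N by rewrite leq_mul2l hr orbT.
have h2 : ((x * v - 1) * p <= (x * v - 1) * (a + 1))%N by rewrite leq_mul2l hp orbT.
have h3 : (x * a * q <= x * a * (v - 2))%N by rewrite leq_mul2l hq orbT.
have hv2 : (2 <= v)%N by lia.
have l1 := @L1 a x v hx hv2.
have l2 := @L2 a x v hx hv2.
move: l1 l2; rewrite -/N -hn => l1 l2.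
have hn1 : (0 < (nn a x u v - 1)%:Z)%R.
  rewrite ltz_nat; lia.
rewrite /d; split.
  rewrite lez_divRL // /f_i -/r -/p -/q.
  move: h1 h2 h3 l1 l2; rewrite -!PoszM.
  move: (nn a x u v) (a * r)%N ((x * v - 1) * p)%N (x * a * q)%N => M A B C.
  lia.
rewrite ltz_divLR // /f_i -/r -/p -/q.
move: h1 h2 h3 l1 l2; rewrite -!PoszM.
move: (nn a x u v) (a * r)%N ((x * v - 1) * p)%N (x * a * q)%N => M A B C.
lia.
Qed.

Theorem proposition4p8 (a x u v : nat) :
  (3 <= a)%N -> (a <= x)%N -> (u <= a - 3)%N ->
  (u + 2 <= v)%N -> (v <= a - 1)%N -> (v * x <= a * (x - 1))%N ->
  (forall i : nat, (1 <= i <= nn a x u v - 2)%N ->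
     [|| inF a x u v 0 i, inF a x u v 1 i | inF a x u v 2 i]) /\
  (forall k : int, k \notin [:: 0%Z; 1%Z; 2%Z] ->
     forall i : nat, ~~ inF a x u v k i).
Proof.
move=> ha hax hu hv hva hvx; split.
  move=> i hi; have [h1 h2] := @key a x u v i ha hv hi.
  rewrite /inF hi /=.
  move: h1 h2; set d := (_ %/ _)%Z => h1 h2.
  lia.
move=> k hk i; rewrite /inF; apply/negP => /andP [hi /eqP hk'].
have [h1 h2] := @key a x u v i ha hv hi.
move: hk h1 h2 hk'; set d := (_ %/ _)%Z => hk h1 h2 hk'.
move: hk; rewrite !inE hk'.
lia.
Qed.
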